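(* Let $n\ge 1$, $d\ge 1$ and $m\ge 1$ be integers, let $p\in(0,1)$ and $\delta\in(0,1)$, and let $I\subseteq[n]$ be a fixed set with $|I|\le d$. Let $M$ be a random $m\times n$ matrix whose entries are independent, each equal to $0$ with probability $p$ and to $1$ with probability $1-p$. For integers $d_1,d_2,k$ put $$P(n,d_1,d_2,k,p)=n^{d_2-k}\left(1-p^{d_2}-p^{d_1}+2p^{d_1+d_2-k}\right)^m,$$ and let $\Pi=\max P(n,d_1,d_2,k,p)$, the maximum being over all integers $d_1,d_2,k$ with $0\le d_1,d_2\le d$, $0\le k\le\min(d_1,d_2)$, excluding the triples with $d_1=d_2=k$. If $\Pi\le \delta/(d^2 2^d)$, then with probability at least $1-\delta$ the matrix $M$ is $(I,d)$-separable.
   Context: For $J\subseteq[n]$ and $a\in\{0,1\}^n$, $T(J,a)=1$ if $a_j=1$ for some $j\in J$ and $T(J,a)=0$ otherwise (so $T(\emptyset,a)=0$). For an $m\times n$ 0/1 matrix $M$ with rows $M_1,\dots,M_m$, $T(J,M)$ is the vector $(T(J,M_i))_{i=1}^m$. The matrix $M$ is called $(I,d)$-separable if for every $J\subseteq[n]$ with $|J|\le d$ and $J\ne I$ we have $T(J,M)\ne T(I,M)$. *)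

(* Defs.v *)
From HB Require Import structures.
From mathcomp Require Import all_boot all_order all_algebra.
Set Implicit Arguments. Unset Strict Implicit. Unset Printing Implicit Defensive.
Import Order.TTheory GRing.Theory Num.Theory.
Local Open Scope ring_scope.

(* T(J,a) for a row a of M (entries in bool, true = 1). *)
Definition Trow (n : nat) (J : {set 'I_n}) (a : 'I_n -> bool) : bool :=
  [exists j in J, a j].

Definition Tmat (m n : nat) (J : {set 'I_n}) (M : 'M[bool]_(m, n)) : {ffun 'I_m -> bool} :=
  [ffun i => Trow J (fun j => M i j)].

Definition separable (m n : nat) (I : {set 'I_n}) (d : nat) (M : 'M[bool]_(m, n)) : bool :=
  [forall J : {set 'I_n}, ((#|J| <= d)%N && (J != I)) ==> (Tmat J M != Tmat I M)].

Definition mx_weight (R : realFieldType) (p : R) (m n : nat) (M : 'M[bool]_(m, n)) : R :=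
  \prod_(i < m) \prod_(j < n) (if M i j then 1 - p else p).

Definition prob_mx (R : realFieldType) (p : R) (m n : nat) (A : pred 'M[bool]_(m, n)) : R :=
  \sum_(M : 'M[bool]_(m, n) | A M) mx_weight p M.

Definition Pfun (R : realFieldType) (n d1 d2 k : nat) (p : R) (m : nat) : R :=
  (n%:R) ^+ (d2 - k) * (1 - p ^+ d2 - p ^+ d1 + 2 * p ^+ (d1 + d2 - k)) ^+ m.

(* Pi = max over 0<=d1,d2<=d, 0<=k<=min(d1,d2), not d1=d2=k.
   All terms are >= 0 (for 0<p<1), so 0 as neutral element is harmless. *)
Definition Pimax (R : realFieldType) (n d m : nat) (p : R) : R :=
  \big[Num.max/0]_(d1 < d.+1) \big[Num.max/0]_(d2 < d.+1)
    \big[Num.max/0]_(k < d.+1 | (k <= minn d1 d2)%N && ~~ ((d1 == d2) && (d2 == k)))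
       Pfun n d1 d2 k p m.

(* Main.v *)
Require Import Defs.
From HB Require Import structures.
From mathcomp Require Import all_boot all_order all_algebra ring lra zify.
Import Order.TTheory GRing.Theory Num.Theory.

Definition bnd (d1 d2 k : nat) : nat :=
  if (k <= minn d1 d2) && ~~ ((d1 == d2) && (d2 == k)) then 'C(d1, k) else 0.

Lemma bnd_le d1 d2 k : bnd d1 d2 k <= 'C(d1, k).
Proof. by rewrite /bnd; case: ifP. Qed.

Lemma twopow d1 d : d1 <= d -> \sum_(k < d.+1) 'C(d1, k) = 2 ^ d1.
Proof.
move=> h.
have -> : 2 ^ d1 = \sum_(k < d1.+1) 'C(d1, k).
  rewrite -[2]/(1 + 1) expnDn; apply: eq_bigr => i _; by rewrite !exp1n !muln1.
rewrite (big_ord_widen _ (fun k => 'C(d1, k)) (_ : d1.+1 <= d.+1)) //.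
rewrite [RHS]big_mkcond /=; apply: eq_bigr => k _.
by case: ifP => // /negbT; rewrite -leqNgt => hk; rewrite bin_small.
Qed.

Lemma claim d1 d d2 : d1 <= d -> d2 < d.+1 ->
  \sum_(k < d.+1) bnd d1 d2 k + (d2 == d1) <= (if d2 == 0 then 1 else 2 ^ d1).
Proof.
move=> hd hd2.
case: (eqVneq d2 0) => [->|d2n0].
  rewrite big_ord_recl big1 => [|i _]; last by rewrite /bnd.
  by rewrite /bnd /= addn0; case: d1 {hd} => //= d1; rewrite bin0.
rewrite -(@twopow d1 d hd).
case: (eqVneq d2 d1) => [e|ne]; last first.
  by rewrite addn0; apply: leq_sum => k _; apply: bnd_le.
subst d2.
have hk : d1 < d.+1 by [].
rewrite (bigD1 (Ordinal hk)) //= [X in _ <= X](bigD1 (Ordinal hk)) //=.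
rewrite /bnd /= !eqxx /= andbF binn add0n addnC leq_add2l.
by apply: leq_sum => k _; case: ifP.
Qed.

Lemma bsum d1 d : d1 <= d ->
  \sum_(d2 < d.+1) \sum_(k < d.+1) bnd d1 d2 k <= d * 2 ^ d1.
Proof.
move=> hd.
have hsum1 : \sum_(d2 < d.+1) ((d2 : nat) == d1 : nat) = 1.
  have hk : d1 < d.+1 by [].
  rewrite (bigD1 (Ordinal hk)) //= eqxx big1 // => i ne.
  case: eqP => // e; case/negP: ne; apply/eqP/val_inj; exact: e.
have : \sum_(d2 < d.+1) (\sum_(k < d.+1) bnd d1 d2 k + ((d2 : nat) == d1))
   <= \sum_(d2 < d.+1) (if (d2 : nat) == 0 then 1 else 2 ^ d1).
  by apply: leq_sum => d2 _; apply: claim.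
rewrite big_split /= hsum1 [X in _ <= X]big_ord_recl /=.
rewrite [\sum_(i < d) _](eq_bigr (fun _ => 2 ^ d1)) //.
rewrite sum_nat_const card_ord; lia.
Qed.

Lemma bin_le_exp n t : 'C(n, t) <= n ^ t.
Proof.
apply: (leq_trans (leq_pmulr _ (fact_gt0 t))).
rewrite bin_ffact ffact_prod.
rewrite -[X in _ <= _ ^ X](card_ord t) -prod_nat_const.
by apply: leq_prod => i _; apply: leq_subr.
Qed.

Lemma count_class n (I : {set 'I_n}) d2 k :
  #|[set J : {set 'I_n} | (#|J| == d2) && (#|I :&: J| == k)]| <= 'C(#|I|, k) * n ^ (d2 - k).
Proof.
set C := [set J : {set 'I_n} | _].
have inj : injective (fun J : {set 'I_n} => (I :&: J, J :\: I)).
  move=> J1 J2 [e1 e2].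
  by rewrite -(setID J1 I) -(setID J2 I) ![_ :&: I]setIC e1 e2.
rewrite -(card_imset C inj).
apply: leq_trans (subset_leq_card (_ : _ \subset
   setX [set A : {set 'I_n} | A \subset I & #|A| == k] [set B : {set 'I_n} | #|B| == d2 - k])) _.
  apply/subsetP => x /imsetP[J]; rewrite inE => /andP[/eqP hJ /eqP hk] ->.
  by rewrite !inE /= subsetIl hk eqxx /= cardsD hJ setIC hk.
rewrite cardsX cards_draws card_draws card_ord leq_mul2l bin_le_exp orbT.
by [].
Qed.

Local Open Scope ring_scope.


Definition wb {R : realFieldType} (p : R) (b : bool) : R := if b then 1 - p else p.
Definition wrow {R : realFieldType} (p : R) {n} (a : {ffun 'I_n -> bool}) : R :=
  \prod_(j < n) wb p (a j).
Definition rowf {m n} (M : 'M[bool]_(m,n)) (i : 'I_m) : {ffun 'I_n -> bool} :=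
  [ffun j => M i j].

Lemma row_prod (R : realFieldType) m n (G : 'I_m -> {ffun 'I_n -> bool} -> R) :
  \sum_(M : 'M[bool]_(m,n)) \prod_i G i (rowf M i) =
  \prod_i \sum_(a : {ffun 'I_n -> bool}) G i a.
Proof.
rewrite bigA_distr_bigA /=.
rewrite (reindex (fun f : {ffun 'I_m -> {ffun 'I_n -> bool}} => \matrix_(i,j) f i j)) /=.
  apply: eq_bigr => f _; apply: eq_bigr => i _; congr (G i _).
  by apply/ffunP => j; rewrite !ffunE mxE.
exists (fun M : 'M[bool]_(m,n) => [ffun i => rowf M i]) => [f _|M _].
  by apply/ffunP => i; apply/ffunP => j; rewrite !ffunE mxE.
by apply/matrixP => i j; rewrite !mxE !ffunE.
Qed.

Lemma wb_ge0 (R : realFieldType) (p : R) b : 0 < p -> p < 1 -> 0 <= wb p b.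
Proof. by move=> h0 h1; rewrite /wb; case: b; rewrite ?subr_ge0 ltW. Qed.

Lemma weight_rows (R : realFieldType) (p : R) m n (M : 'M[bool]_(m,n)) :
  mx_weight p M = \prod_i wrow p (rowf M i).
Proof.
apply: eq_bigr => i _; apply: eq_bigr => j _; by rewrite ffunE.
Qed.

Lemma Z_lemma (R : realFieldType) (p : R) n (S : {set 'I_n}) :
  \sum_(a : {ffun 'I_n -> bool}) (if ~~ Trow S a then wrow p a else 0) = p ^+ #|S|.
Proof.
pose F (j : 'I_n) (b : bool) : R := if b then (if j \in S then 0 else 1 - p) else p.
transitivity (\sum_(a : {ffun 'I_n -> bool}) \prod_j F j (a j)).
  apply: eq_bigr => a _; rewrite /Trow.
  case: existsP => [[j /andP[jS aj]]|nE] /=.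
    apply/esym/eqP/prodf_eq0; exists j => //=.
    by rewrite /F aj jS.
  apply: eq_bigr => j _; rewrite /F /wb; case aj: (a j) => //.
  case jS: (j \in S) => //; case: nE; exists j; by rewrite jS aj.
rewrite -bigA_distr_bigA /=.
rewrite -prodr_const [RHS]big_mkcond /=; apply: eq_bigr => j _.
by rewrite big_bool /F; case: (j \in S) => /=; rewrite ?add0r ?subrK.
Qed.

Lemma Trow_U n (A B : {set 'I_n}) (a : 'I_n -> bool) :
  Trow (A :|: B) a = Trow A a || Trow B a.
Proof.
rewrite /Trow; apply/existsP/orP => [[j /andP[]]|[/existsP[j /andP[jA aj]]|/existsP[j /andP[jB aj]]]].
- by rewrite inE => /orP[jA|jB] aj; [left|right]; apply/existsP; exists j; rewrite ?jA ?jB aj.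
- by exists j; rewrite inE jA aj.
- by exists j; rewrite inE jB aj orbT.
Qed.

Lemma Trow0 n (a : 'I_n -> bool) : Trow set0 a = false.
Proof. by apply/existsP => -[j]; rewrite inE. Qed.

Definition qval {R : realFieldType} (p : R) (d1 d2 u : nat) : R :=
  1 - p ^+ d2 - p ^+ d1 + 2 * p ^+ u.

Lemma row_event (R : realFieldType) (p : R) n (I J : {set 'I_n}) :
  \sum_(a : {ffun 'I_n -> bool}) (if Trow J a == Trow I a then wrow p a else 0)
  = qval p #|I| #|J| #|I :|: J|.
Proof.
have Z := @Z_lemma R p n.
transitivity (\sum_(a : {ffun 'I_n -> bool})
   ((if ~~ Trow set0 a then wrow p a else 0)
    - (if ~~ Trow J a then wrow p a else 0)
    - (if ~~ Trow I a then wrow p a else 0)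
    + 2 * (if ~~ Trow (I :|: J) a then wrow p a else 0))).
  apply: eq_bigr => a _; rewrite Trow0 Trow_U.
  by case: (Trow I a); case: (Trow J a) => /=; ring.
rewrite big_split /= -mulr_sumr !sumrB !Z cards0 expr0.
by rewrite /qval.
Qed.

Lemma Trow_rowf m n (S : {set 'I_n}) (M : 'M[bool]_(m,n)) i :
  Trow S (rowf M i) = Trow S (fun j => M i j).
Proof. by rewrite /Trow; apply: eq_existsb => j; rewrite ffunE. Qed.

Lemma Tmat_eqE m n (I J : {set 'I_n}) (M : 'M[bool]_(m,n)) :
  (Tmat J M == Tmat I M) = [forall i, Trow J (rowf M i) == Trow I (rowf M i)].
Proof.
apply/eqP/forallP => [H i|H].
  by have := congr1 (fun f : {ffun _ -> bool} => f i) H; rewrite /Tmat !ffunE !Trow_rowf => ->.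
apply/ffunP => i; rewrite !ffunE; have := H i; rewrite !Trow_rowf => /eqP; exact.
Qed.

Definition fJ {R : realFieldType} (p : R) m {n} (I J : {set 'I_n}) : R :=
  prob_mx p (fun M : 'M[bool]_(m, n) => Tmat J M == Tmat I M).

Lemma fJ_val (R : realFieldType) (p : R) m n (I J : {set 'I_n}) :
  fJ p m I J = (qval p #|I| #|J| #|I :|: J|) ^+ m.
Proof.
rewrite /fJ /prob_mx big_mkcond /= -row_event -[X in _ ^+ X](card_ord m) -prodr_const -row_prod.
apply: eq_bigr => M _; rewrite Tmat_eqE weight_rows.
case: forallP => [H|H].
  by apply: eq_bigr => i _; rewrite H.
apply/esym/eqP/prodf_eq0.
have [i Hi] : exists i, Trow J (rowf M i) != Trow I (rowf M i).
  by apply/existsP; rewrite -negb_forall; apply/forallP.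
by exists i => //; rewrite (negbTE Hi).
Qed.

Lemma w_ge0 (R : realFieldType) (p : R) m n (M : 'M[bool]_(m,n)) :
  0 < p -> p < 1 -> 0 <= mx_weight p M.
Proof.
move=> h0 h1; apply: prodr_ge0 => i _; apply: prodr_ge0 => j _.
by case: (M i j); lra.
Qed.

Lemma prob_ge0 (R : realFieldType) (p : R) m n (A : pred 'M[bool]_(m,n)) :
  0 < p -> p < 1 -> 0 <= prob_mx p A.
Proof. by move=> h0 h1; apply: sumr_ge0 => M _; apply: w_ge0. Qed.

Lemma total1 (R : realFieldType) (p : R) m n :
  \sum_(M : 'M[bool]_(m,n)) mx_weight p M = 1.
Proof.
under eq_bigr do rewrite weight_rows.
rewrite (@row_prod R m n (fun _ a => wrow p a)); apply: big1 => i _.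
have := @Z_lemma R p n set0; rewrite cards0 expr0 => <-.
by apply: eq_bigr => a _; rewrite Trow0.
Qed.

Lemma probC (R : realFieldType) (p : R) m n (A : pred 'M[bool]_(m,n)) :
  prob_mx p A = 1 - prob_mx p (fun M => ~~ A M).
Proof.
by rewrite -(@total1 R p m n) (bigID A) /= /prob_mx addrK.
Qed.

Lemma union_bound (R : realFieldType) (p : R) m n (I : {set 'I_n}) d :
  0 < p -> p < 1 ->
  prob_mx p (fun M : 'M[bool]_(m,n) => ~~ separable I d M) <=
  \sum_(J : {set 'I_n} | (#|J| <= d)%N && (J != I)) fJ p m I J.
Proof.
move=> h0 h1; rewrite /fJ /prob_mx.
rewrite [X in _ <= X](eq_bigr (fun J => \sum_(M : 'M[bool]_(m,n)) (if Tmat J M == Tmat I M then mx_weight p M else 0))); last by move=> J _; rewrite big_mkcond.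
rewrite (exchange_big_dep predT) //= [X in X <= _]big_mkcond /=.
apply: ler_sum => M _.
case: ifP => nsep; last by apply: sumr_ge0 => K _; case: ifP => // _; apply: w_ge0.
have [J /andP[SJ EJ]] : exists J : {set 'I_n}, ((#|J| <= d)%N && (J != I)) && (Tmat J M == Tmat I M).
  move: nsep; rewrite /separable negb_forall => /existsP[J].
  by rewrite negb_imply negbK => H; exists J.
rewrite (bigD1 J) ?SJ //= (eqP EJ) eqxx lerDl.
by apply: sumr_ge0 => K _; case: ifP => // _; apply: w_ge0.
Qed.


Lemma bigmax0_ge0 (R : realFieldType) (T : Type) (r : seq T) (P : pred T) (F : T -> R) :
  0 <= \big[Num.max/0]_(i <- r | P i) F i.
Proof.
elim: r => [|x r IH]; rewrite ?big_nil ?big_cons //.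
by case: ifP => // _; rewrite le_max IH orbT.
Qed.

Lemma bigmax0_ge (R : realFieldType) (T : eqType) (r : seq T) (P : pred T) (F : T -> R) x c :
  x \in r -> P x -> c <= F x -> c <= \big[Num.max/0]_(i <- r | P i) F i.
Proof.
elim: r => [|y r IH] //; rewrite in_cons big_cons => /orP[/eqP<-|xr] Px cF.
  by rewrite Px le_max cF.
case: ifP => _; last exact: IH.
by rewrite le_max (IH xr Px cF) orbT.
Qed.

Lemma Pfun_le (R : realFieldType) n d m (p : R) (d1 d2 k : nat) :
  (d1 <= d)%N -> (d2 <= d)%N -> (k <= minn d1 d2)%N -> ~~ ((d1 == d2) && (d2 == k)) ->
  Pfun n d1 d2 k p m <= Pimax n d m p.
Proof.
move=> h1 h2 hk hx.
have hk' : (k <= d)%N by move: hk; rewrite leq_min => /andP[] _ /leq_trans; apply.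
rewrite /Pimax.
apply: (@bigmax0_ge _ _ _ _ _ (Ordinal (h1 : (d1 < d.+1)%N))); rewrite ?mem_index_enum //.
apply: (@bigmax0_ge _ _ _ _ _ (Ordinal (h2 : (d2 < d.+1)%N))); rewrite ?mem_index_enum //.
apply: (@bigmax0_ge _ _ _ _ _ (Ordinal (hk' : (k < d.+1)%N))); rewrite ?mem_index_enum //=.
by rewrite hk.
Qed.

Lemma Pimax_ge0 (R : realFieldType) n d m (p : R) : 0 <= Pimax n d m p.
Proof. exact: bigmax0_ge0. Qed.



Lemma class_bound (R : realFieldType) n d m (p : R) (I : {set 'I_n}) (d2 k : nat) :
  0 < p -> p < 1 -> (#|I| <= d)%N -> (d2 <= d)%N ->
  \sum_(J : {set 'I_n} | (#|J| <= d)%N && (J != I))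
     (if (#|J| == d2) && (#|I :&: J| == k) then fJ p m I J else 0)
  <= (bnd #|I| d2 k)%:R * Pimax n d m p.
Proof.
move=> h0 h1 hI hd2.
rewrite -big_mkcondr /=.
case: (boolP ((k <= minn #|I| d2)%N && ~~ ((#|I| == d2) && (d2 == k)))) => hc; last first.
  rewrite /bnd (negbTE hc) mul0r big1 // => J /andP[/andP[hJd hJI] /andP[/eqP e2 /eqP ek]].
  case/negP: hc; rewrite leq_min -ek -e2 subset_leq_card ?subsetIl //= subset_leq_card ?subsetIr //=.
  apply/negP => /andP[/eqP eIJ /eqP eJk].
  have e1 : I :&: J = I by apply/eqP; rewrite eqEcard subsetIl /= eIJ eJk.
  have e3 : I :&: J = J by apply/eqP; rewrite eqEcard subsetIr /= eJk.
  by case/negP: hJI; rewrite -e3 e1.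
rewrite /bnd hc.
set Q := (qval p #|I| d2 (#|I| + d2 - k)) ^+ m.
have hQ : forall J : {set 'I_n}, (#|J| == d2) && (#|I :&: J| == k) -> fJ p m I J = Q.
  move=> J /andP[/eqP e2 /eqP ek]; rewrite fJ_val /Q; congr (qval _ _ _ _ ^+ _) => //.
  have := cardsUI I J; rewrite ek e2; lia.
case: (pickP (fun J : {set 'I_n} => ((#|J| <= d)%N && (J != I)) && ((#|J| == d2) && (#|I :&: J| == k)))) => [J0 HJ0|Hnone]; last first.
  rewrite big_pred0 //; apply: mulr_ge0 => //; exact: Pimax_ge0.
have Q0 : 0 <= Q by rewrite -(hQ J0); [apply: prob_ge0 | case/andP: HJ0].
set Cs := [set J : {set 'I_n} | (#|J| == d2) && (#|I :&: J| == k)].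
apply: (@le_trans _ _ (\sum_(J in Cs) Q)).
  rewrite big_mkcond [X in _ <= X]big_mkcond /=; apply: ler_sum => J _.
  rewrite inE; case: ifP => [/andP[_ HJ]|_]; first by rewrite HJ hQ.
  by case: ifP.
rewrite sumr_const.
apply: (@le_trans _ _ (Q *+ ('C(#|I|, k) * n ^ (d2 - k)))).
  by apply: ler_wpMn2l => //; apply: count_class.
rewrite -mulr_natl natrM natrX -mulrA ler_wpM2l //.
have -> : n%:R ^+ (d2 - k) * Q = Pfun n #|I| d2 k p m by [].
apply: Pfun_le => //.
by move: hc => /andP[].
by move: hc => /andP[].
Qed.



Lemma split_sizes (R : realFieldType) n d (I J : {set 'I_n}) (x : R) :
  (#|J| <= d)%N ->
  x = \sum_(d2 < d.+1) \sum_(k < d.+1) (if (#|J| == d2) && (#|I :&: J| == k) then x else 0).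
Proof.
move=> hJ.
have h2 : (#|J| < d.+1)%N by [].
have hk : (#|I :&: J| < d.+1)%N.
  by apply: leq_ltn_trans h2; apply: subset_leq_card; apply: subsetIr.
rewrite (bigD1 (Ordinal h2)) //=.
rewrite [X in _ + X]big1 => [|i ne]; last first.
  apply: big1 => k _; case: eqP => //= e; case/negP: ne; apply/eqP/val_inj; by rewrite /= e.
rewrite addr0 eqxx (bigD1 (Ordinal hk)) //= eqxx big1 ?addr0 // => i ne.
by case: eqP => //= e; case/negP: ne; apply/eqP/val_inj; rewrite /= e.
Qed.

Theorem lemma1 (R : realFieldType) (n d m : nat) (p delta : R)
  (I : {set 'I_n})
  (hn : (1 <= n)%N) (hd : (1 <= d)%N) (hm : (1 <= m)%N)
  (hp0 : 0 < p) (hp1 : p < 1) (hdelta0 : 0 < delta) (hdelta1 : delta < 1)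
  (hI : (#|I| <= d)%N)
  (hPi : Pimax n d m p <= delta / ((d ^ 2)%:R * 2 ^+ d)) :
  1 - delta <= prob_mx p (fun M : 'M[bool]_(m, n) => separable I d M).
Proof.
set Pi := Pimax n d m p.
have Pi0 : 0 <= Pi := @Pimax_ge0 R n d m p.
have hpos : 0 < (d ^ 2)%:R * 2 ^+ d :> R.
  by apply: mulr_gt0; [rewrite ltr0n expn_gt0 hd | apply: exprn_gt0].
have HPi : ((d ^ 2 * 2 ^ d)%N)%:R * Pi <= delta.
  by rewrite natrM (natrX _ 2 d) mulrC -ler_pdivlMr.
have H : prob_mx p (fun M : 'M[bool]_(m, n) => ~~ separable I d M) <= delta.
  apply: le_trans (@union_bound R p m n I d hp0 hp1) _.
  rewrite (eq_bigr (fun J : {set 'I_n} => \sum_(d2 < d.+1) \sum_(k < d.+1)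
        (if (#|J| == d2) && (#|I :&: J| == k) then fJ p m I J else 0))); last first.
    by move=> J /andP[hJ _]; apply: split_sizes.
  rewrite exchange_big /=.
  under eq_bigr do rewrite exchange_big /=.
  apply: (@le_trans _ _ (\sum_(d2 < d.+1) \sum_(k < d.+1) (bnd #|I| d2 k)%:R * Pi)).
    apply: ler_sum => d2 _; apply: ler_sum => k _.
    by apply: class_bound => //; rewrite -ltnS.
  under eq_bigr do rewrite -mulr_suml.
  rewrite -mulr_suml.
  under eq_bigr do rewrite -natr_sum.
  rewrite -natr_sum.
  apply: le_trans HPi.
  apply: ler_wpM2r => //.
  rewrite ler_nat.
  apply: leq_trans (@bsum _ _ hI) _.
  apply: leq_mul; first by rewrite (_ : (d ^ 2 = d * d)%N) ?leq_pmulr.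
  by rewrite leq_pexp2l.
rewrite probC.
rewrite lerD2l lerN2.
exact: H.
Qed.
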